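(* Let $A,B\in\mathbb{R}^{p\times p}$, $a,b\in\mathbb{R}^p$, $\alpha,\beta\in\mathbb{R}$, and let $$f(x)=\frac{g(x)}{q(x)}=\frac{\frac12\langle Ax,x\rangle+\langle a,x\rangle+\alpha}{\frac12\langle Bx,x\rangle+\langle b,x\rangle+\beta}.$$ Let $0<m<M$ and $K=\{x\in\mathbb{R}^p: m\le q(x)\le M\}$. Assume $A$ is positive definite and at least one of the following holds: (a) $B=0$; (b) $g$ is non-negative on $K$ and $B$ is negative semi-definite; (c) $g$ is non-positive on $K$ and $B$ is positive semi-definite. Let $x^*$ be a minimizer of $f$ on $K$. Then $f$ is $\kappa$-quasar-convex on $K$ with respect to $x^*$ with $\kappa=\frac mM$, and $f$ is $(\frac\kappa2,\gamma)$-strongly quasar-convex on $K$ with respect to $x^*$, where $\gamma=\frac{\sigma_{\min}(A)}{m}$. Moreover, for every $\lambda\in(0,1)$, $f$ is $\big(\lambda\kappa,(\lambda^{-1}-1)\frac{\sigma_{\min}(A)}{4M}\big)$-strongly quasar-convex on $K$ with respect to $x^*$.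
   Context: $\sigma_{\min}(A)$ is the minimum eigenvalue of $A$. For $\kappa\in(0,1]$ and $\mu\ge0$, $f$ is $(\kappa,\mu)$-strongly quasar-convex on $K$ with respect to $x^*$ if $f(x^* )\ge f(x)+\frac1\kappa\langle\nabla f(x),x^*-x\rangle+\frac\mu2\|x^*-x\|^2$ for all $x\in K$; $\kappa$-quasar-convex means the case $\mu=0$. *)

(* Defs.v *)
From HB Require Import structures.
From mathcomp Require Import all_boot all_order all_algebra.
From mathcomp Require Import all_classical all_reals all_analysis.
Set Implicit Arguments. Unset Strict Implicit. Unset Printing Implicit Defensive.
Import Order.TTheory GRing.Theory Num.Theory.
Import numFieldNormedType.Exports.
Local Open Scope ring_scope.
Local Open Scope classical_set_scope.

Definition dotp (R : realType) (p : nat) (u v : 'cV[R]_p) : R := (u^T *m v) 0 0.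

Definition grad (R : realType) (p : nat) (f : 'cV[R]_p -> R) (x : 'cV[R]_p)
  : 'cV[R]_p := \col_i derive f x (delta_mx i 0 : 'cV[R]_p).

Definition sigma_min (R : realType) (p : nat) (A : 'M[R]_p) : R :=
  inf [set a : R | eigenvalue A a].

Definition strongly_quasar_convex (R : realType) (p : nat) (kappa mu : R)
  (f : 'cV[R]_p -> R) (K : set 'cV[R]_p) (xs : 'cV[R]_p) : Prop :=
  forall x, K x ->
    f x + kappa^-1 * dotp (grad f x) (xs - x) + mu / 2 * dotp (xs - x) (xs - x)
      <= f xs.

Definition quasar_convex (R : realType) (p : nat) (kappa : R)
  (f : 'cV[R]_p -> R) (K : set 'cV[R]_p) (xs : 'cV[R]_p) : Prop :=
  strongly_quasar_convex kappa 0 f K xs.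

Definition quadf (R : realType) (p : nat) (A : 'M[R]_p) (a : 'cV[R]_p) (alpha : R)
  (x : 'cV[R]_p) : R := 2^-1 * dotp (A *m x) x + dotp a x + alpha.

Definition posdef (R : realType) (p : nat) (A : 'M[R]_p) : Prop :=
  A^T = A /\ forall x : 'cV[R]_p, x != 0 -> 0 < dotp (A *m x) x.

Definition psd (R : realType) (p : nat) (B : 'M[R]_p) : Prop :=
  forall x : 'cV[R]_p, 0 <= dotp (B *m x) x.

Definition nsd (R : realType) (p : nat) (B : 'M[R]_p) : Prop :=
  forall x : 'cV[R]_p, dotp (B *m x) x <= 0.

(* Main.v *)
Require Import Defs.
From HB Require Import structures.
From mathcomp Require Import all_boot all_order all_algebra.
From mathcomp Require Import all_classical all_reals all_analysis.
From mathcomp Require Import ring lra.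
Set Implicit Arguments. Unset Strict Implicit.
Import Order.TTheory GRing.Theory Num.Theory.
Import numFieldNormedType.Exports.
Local Open Scope ring_scope.
Local Open Scope classical_set_scope.

Section Helpers.
Variables (R : realType) (p : nat).
Implicit Types (u v w x d : 'cV[R]_p) (C : 'M[R]_p).

Lemma dotpDl u w v : dotp (u + w) v = dotp u v + dotp w v.
Proof. by rewrite /dotp linearD /= mulmxDl mxE. Qed.
Lemma dotpZl k u v : dotp (k *: u) v = k * dotp u v.
Proof. by rewrite /dotp linearZ /= -scalemxAl mxE. Qed.
Lemma dotpDr u w v : dotp v (u + w) = dotp v u + dotp v w.
Proof. by rewrite /dotp mulmxDr mxE. Qed.
Lemma dotpZr k u v : dotp v (k *: u) = k * dotp v u.
Proof. by rewrite /dotp -scalemxAr mxE. Qed.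
Lemma dotp_mulmx C u v : dotp (C *m u) v = dotp u (C^T *m v).
Proof. by rewrite /dotp trmx_mul mulmxA. Qed.
Lemma dotpE u v : dotp u v = \sum_i u i 0 * v i 0.
Proof. by rewrite /dotp mxE; apply: eq_bigr => i _; rewrite mxE. Qed.
Lemma dotpC u v : dotp u v = dotp v u.
Proof. by rewrite !dotpE; apply: eq_bigr => i _; rewrite mulrC. Qed.
Lemma dotp0l v : dotp 0 v = 0.
Proof. by rewrite /dotp linear0 mul0mx mxE. Qed.
Lemma dotp0r v : dotp v 0 = 0.
Proof. by rewrite /dotp mulmx0 mxE. Qed.
Lemma dotp_delta w i : dotp w (delta_mx i 0) = w i 0.
Proof.
rewrite dotpE (bigD1 i) //= big1 => [|k nki]; rewrite !mxE.
  by rewrite !eqxx mulr1 addr0.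
by rewrite (negbTE nki) mulr0.
Qed.
Lemma dotp_ge0 u : 0 <= dotp u u.
Proof. by rewrite dotpE; apply: sumr_ge0 => i _; rewrite -expr2 sqr_ge0. Qed.
Lemma dotp_gt0 u : u != 0 -> 0 < dotp u u.
Proof.
move=> u0; rewrite lt_def dotp_ge0 andbT; apply: contra u0.
rewrite dotpE psumr_eq0 => [/allP H|i _]; last by rewrite -expr2 sqr_ge0.
apply/eqP/matrixP => i j; rewrite (ord1 j) !mxE.
have := H i (mem_index_enum _); rewrite /= -expr2 sqrf_eq0.
by move/eqP.
Qed.

Lemma dotpNl u v : dotp (- u) v = - dotp u v.
Proof. by rewrite -scaleN1r dotpZl mulN1r. Qed.

Definition wq C (c : 'cV[R]_p) x := 2^-1 *: (C *m x + C^T *m x) + c.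

Lemma quadf_expand C c (g : R) x v (h : R) :
  quadf C c g (h *: v + x) =
  quadf C c g x + h * dotp (wq C c x) v + h ^+ 2 * (2^-1 * dotp (C *m v) v).
Proof.
rewrite /quadf /wq mulmxDr -scalemxAr !(dotpDl, dotpDr, dotpZl, dotpZr).
rewrite [dotp (C^T *m x) v]dotpC -dotp_mulmx.
ring.
Qed.

End Helpers.

Section Der.
Variables (R : realType) (p : nat).
Implicit Types (u v w x d : 'cV[R]_p) (C : 'M[R]_p).

Lemma derive_line (f : 'cV[R]_p -> R) x v :
  'D_v f x = 'D_1 (fun h : R => f (h *: v + x)) 0.
Proof.
rewrite /derive.
suff -> : (fun h : R => h^-1 *: ((f \o shift x) (h *: v) - f x)) =
  (fun h : R => h^-1 *: (((fun h : R => f (h *: v + x)) \o shift 0) (h *: 1) - f (0 *: v + x))) by [].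
apply/funext => h /=.
by rewrite scale0r add0r /GRing.scale /= mulr1 addr0.
Qed.

Lemma derive_ratio A a (al : R) B b (be : R) x v :
  quadf B b be x != 0 ->
  'D_v (fun y => quadf A a al y / quadf B b be y) x =
  (dotp (wq A a x) v * quadf B b be x - quadf A a al x * dotp (wq B b x) v)
    / (quadf B b be x) ^+ 2.
Proof.
move=> q0.
set P : {poly R} := (quadf A a al x)%:P + (dotp (wq A a x) v) *: 'X
   + (2^-1 * dotp (A *m v) v) *: 'X^2.
set Q : {poly R} := (quadf B b be x)%:P + (dotp (wq B b x) v) *: 'X
   + (2^-1 * dotp (B *m v) v) *: 'X^2.
have E : (fun h : R => quadf A a al (h *: v + x) / quadf B b be (h *: v + x))
   = (horner P) * (fun h => (horner Q h)^-1).
  apply/funext => h; rewrite [RHS]/= !quadf_expand; congr (_ / _).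
    by rewrite /P !(hornerD, hornerZ, hornerC, hornerX, hornerXn); ring.
  by rewrite /Q !(hornerD, hornerZ, hornerC, hornerX, hornerXn); ring.
rewrite derive_line E.
have Q0 : horner Q 0 != 0.
  by rewrite /Q !(hornerD, hornerZ, hornerC, hornerX, hornerXn) expr0n /= !mulr0 !addr0.
have dQ : derivable (horner Q) 0 1 by exact: derivable_horner.
rewrite deriveM // deriveV //.
rewrite !(@derive_val _ _ _ _ _ _ _ (is_derive_poly _ _)).
rewrite /P /Q !(derivD, derivZ, derivC, derivX, derivXn, hornerD, hornerZ, hornerC, hornerX, hornerXn, hornerMn) /=.
rewrite !expr1 expr0n /= !(mulr0, addr0, add0r, mulr1).
rewrite /GRing.scale /=.
by field.
Qed.


Lemma grad_ratio_dot A a (al : R) B b (be : R) x d :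
  quadf B b be x != 0 ->
  dotp (grad (fun y => quadf A a al y / quadf B b be y) x) d =
  (dotp (wq A a x) d * quadf B b be x - quadf A a al x * dotp (wq B b x) d)
    / (quadf B b be x) ^+ 2.
Proof.
move=> q0.
have -> : grad (fun y => quadf A a al y / quadf B b be y) x =
  (quadf B b be x / (quadf B b be x) ^+ 2) *: wq A a x
  - (quadf A a al x / (quadf B b be x) ^+ 2) *: wq B b x.
  apply/matrixP => i j; rewrite (ord1 j) mxE derive_ratio // !dotp_delta.
  set wA := wq A a x; set wB := wq B b x; rewrite !mxE.
  by rewrite /GRing.scale /=; field.
rewrite dotpDl dotpNl !dotpZl.
by field.
Qed.
End Der.

Lemma scalar_CS (R : realType) (a b c : R) :
  (forall t, 0 <= a + 2 * t * c + t ^+ 2 * b) -> 0 <= b -> c ^+ 2 <= a * b.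
Proof.
move=> H b0; have [bz|bp] := eqVneq b 0.
  rewrite bz mulr0; have [cz|cn] := eqVneq c 0; first by rewrite cz expr0n.
  have := H (- (a + 1) / (2 * c)); rewrite bz mulr0 addr0.
  have -> : 2 * (- (a + 1) / (2 * c)) * c = - (a + 1) by field.
  lra.
have bpos : 0 < b by rewrite lt_def bp b0.
have := H (- c / b).
have -> : a + 2 * (- c / b) * c + (- c / b) ^+ 2 * b = (a * b - c ^+ 2) / b by field.
rewrite pmulr_lge0 ?invr_gt0 //; lra.
Qed.

Section Spec.
Variables (R : realType) (p : nat).
Implicit Types (u v w x d : 'cV[R]_p) (C S T : 'M[R]_p).

Lemma psd_CS S x y : S^T = S -> (forall u, 0 <= dotp (S *m u) u) ->
  dotp (S *m x) y ^+ 2 <= dotp (S *m x) x * dotp (S *m y) y.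
Proof.
move=> ST Sp; apply: scalar_CS; last exact: Sp.
move=> t; have := Sp (t *: y + x).
have := quadf_expand S 0 0 x y t; rewrite /quadf !dotp0l !addr0.
have -> : wq S 0 x = S *m x.
  have h2 : 2^-1 + 2^-1 = 1 :> R by field.
  by rewrite /wq ST addr0 scalerDr -scalerDl h2 scale1r.
move=> E; have -> : dotp (S *m (t *: y + x)) (t *: y + x) =
  2 * (2^-1 * dotp (S *m (t *: y + x)) (t *: y + x)) by field.
rewrite E.
have -> : 2 * (2^-1 * dotp (S *m x) x + t * dotp (S *m x) y + t ^+ 2 * (2^-1 * dotp (S *m y) y)) = dotp (S *m x) x + 2 * t * dotp (S *m x) y + t ^+ 2 * dotp (S *m y) y by field.
by [].
Qed.

Lemma coord_le u i : u i 0 ^+ 2 <= dotp u u.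
Proof.
rewrite dotpE (bigD1 i) //= -expr2 lerDl; apply: sumr_ge0 => j _.
by rewrite -expr2 sqr_ge0.
Qed.

Lemma prod_le u i j : `|u i 0 * u j 0| <= dotp u u.
Proof.
have := coord_le u i; have := coord_le u j.
rewrite normrM -(real_normK (num_real (u i 0))) -(real_normK (num_real (u j 0))).
have := normr_ge0 (u i 0); have := normr_ge0 (u j 0).
set X := `|u i 0|; set Y := `|u j 0|.
move=> *; nra.
Qed.

Lemma bilin_bound T d :
  dotp d (T *m d) <= (\sum_i \sum_j `|T i j|) * dotp d d.
Proof.
rewrite [in X in X <= _]dotpE mulr_suml; apply: ler_sum => i _.
rewrite mxE mulr_sumr mulr_suml; apply: ler_sum => j _.
apply: le_trans (ler_norm _) _.
rewrite mulrCA normrM; apply: ler_wpM2l => //.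
by rewrite mulrC prod_le.
Qed.

End Spec.

Section Spec2.
Variables (R : realType) (p : nat).
Implicit Types (u v w x d : 'cV[R]_p) (C S T : 'M[R]_p).

Lemma sigma_min_le (A : 'M[R]_p) : posdef A ->
  forall d, sigma_min A * dotp d d <= dotp (A *m d) d.
Proof.
move=> [AT Apos] d.
have [->|d0] := eqVneq d 0; first by rewrite mulmx0 dotp0l ?dotp0r mulr0.
pose E := [set r : R | exists2 u : 'cV[R]_p, u != 0 & r = dotp (A *m u) u / dotp u u].
have hE : has_lbound E.
  exists 0 => r [u u0 ->]; apply: divr_ge0; first exact: ltW (Apos u u0).
  exact: dotp_ge0.
have nE : nonempty E by exists (dotp (A *m d) d / dotp d d); exists d.
pose mu := inf E.
have muE u : u != 0 -> mu * dotp u u <= dotp (A *m u) u.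
  move=> u0; rewrite -ler_pdivlMr ?dotp_gt0 //.
  by apply: ge_inf => //; exists u.
pose S := A - mu%:M.
have SE u : dotp (S *m u) u = dotp (A *m u) u - mu * dotp u u.
  by rewrite /S mulmxBl dotpDl dotpNl mul_scalar_mx dotpZl.
have Spsd u : 0 <= dotp (S *m u) u.
  rewrite SE subr_ge0; have [->|u0] := eqVneq u 0.
    by rewrite mulmx0 dotp0l ?dotp0r mulr0.
  exact: muE.
have ST : S^T = S by rewrite /S linearB /= tr_scalar_mx AT.
have eig : eigenvalue A mu.
  apply/eigenvalueP.
  have [Su|nSu] := boolP (S \in unitmx).
    exfalso.
    pose T := invmx S.
    pose C := \sum_i \sum_j `|T i j|.
    have C0 : 0 <= C by apply: sumr_ge0 => i _; apply: sumr_ge0.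
    have lb : lbound E (mu + (C + 1)^-1).
      move=> r [u u0 ->].
      have dd := dotp_gt0 u0.
      have cs := psd_CS (T *m u) u ST Spsd.
      have STu : S *m (T *m u) = u by rewrite mulmxA mulmxV // mul1mx.
      rewrite STu in cs.
      have bb := bilin_bound T u.
      have sp := Spsd u.
      have key : dotp u u <= (C + 1) * dotp (S *m u) u.
        have h1 : dotp u u ^+ 2 <= C * dotp u u * dotp (S *m u) u.
          apply: le_trans cs _; apply: ler_wpM2r => //.
        have h2 : dotp u u <= C * dotp (S *m u) u.
          rewrite -(ler_pM2r dd); move: h1; rewrite expr2; lra.
        lra.
      rewrite SE in key.
      rewrite ler_pdivlMr // mulrDl.
      have : dotp u u / (C + 1) <= dotp (A *m u) u - mu * dotp u u.
        by rewrite ler_pdivrMr ?ltr_wpDl // mulrC.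
      lra.
    have := lb_le_inf nE lb.
    rewrite -/mu => h.
    have : 0 < (C + 1)^-1 by rewrite invr_gt0 ltr_wpDl.
    lra.
  move: nSu; rewrite unitmxE unitfE negbK => /det0P [v v0 vS].
  exists v => //; apply/eqP; rewrite -subr_eq0 -mul_mx_scalar -mulmxBr.
  by rewrite -vS.
have sig : sigma_min A <= mu.
  rewrite /sigma_min; apply: ge_inf => //.
  exists 0 => r /eigenvalueP [v vA v0].
  have u0 : v^T != 0 by rewrite trmx_eq0.
  have Au : A *m v^T = r *: v^T.
    by rewrite -{1}AT -trmx_mul vA linearZ.
  have := Apos _ u0; rewrite Au dotpZl.
  have := dotp_gt0 u0; move=> h1 h2.
  by apply: ltW; rewrite -(pmulr_lgt0 _ h1).
apply: le_trans (muE _ d0).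
by apply: ler_wpM2r => //; exact: dotp_ge0.
Qed.

End Spec2.

Lemma core_ineq (R : realType) (D qx qs fs fx Qa k mu dd : R) :
  0 < qx -> 0 < k -> k * qx <= qs -> fs <= fx ->
  D * qx + Qa / 2 <= qs * (fs - fx) -> mu * dd * (k * qx) <= Qa ->
  fx + k^-1 * D + mu / 2 * dd <= fs.
Proof.
move=> qx0 k0 kq fsx HD Hmu.
have kq0 : 0 < k * qx by apply: mulr_gt0.
rewrite -(ler_pM2r kq0).
have -> : (fx + k^-1 * D + mu / 2 * dd) * (k * qx) =
  fx * (k * qx) + D * qx + (mu * dd * (k * qx)) / 2.
  by field; rewrite gt_eqF.
have : (qs - k * qx) * (fs - fx) <= 0.
  by apply: mulr_ge0_le0; lra.
nra.
Qed.

Lemma st_le (R : realType) (s Qa t : R) :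
  s <= Qa -> 0 <= Qa -> 0 <= t -> t <= 1 -> s * t <= Qa.
Proof. move=> *; nra. Qed.

Theorem proposition5p5 (R : realType) (p : nat)
  (A B : 'M[R]_p) (a b : 'cV[R]_p) (alpha beta m M : R) (xs : 'cV[R]_p) :
  let g := quadf A a alpha in
  let q := quadf B b beta in
  let f := fun x => g x / q x in
  let K := [set x | m <= q x <= M] in
  0 < m -> m < M ->
  posdef A ->
  (B = 0 \/ ((forall x, K x -> 0 <= g x) /\ nsd B)
         \/ ((forall x, K x -> g x <= 0) /\ psd B)) ->
  K xs -> (forall x, K x -> f xs <= f x) ->
  let kappa := m / M in
  quasar_convex kappa f K xs /\
  strongly_quasar_convex (kappa / 2) (sigma_min A / m) f K xs /\
  (forall lambda : R, 0 < lambda < 1 ->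
     strongly_quasar_convex (lambda * kappa)
       ((lambda^-1 - 1) * (sigma_min A / (4 * M))) f K xs).
Proof.
move=> g q f K m0 mM Apd HB Kxs Hmin kappa.
have gen : forall k mu, 0 < k -> (forall x, K x -> k * q x <= m) ->
  (forall x, K x -> forall Qa dd, 0 <= dd -> sigma_min A * dd <= Qa -> 0 <= Qa ->
     mu * dd * (k * q x) <= Qa) ->
  strongly_quasar_convex k mu f K xs.
  move=> k mu k0 kqm Hmu x Kx.
  have [/andP [qxm qxM]] := Kx.
  have [/andP [qsm qsM]] := Kxs.
  have qx0 : 0 < q x by lra.
  have qs0 : 0 < q xs by lra.
  set d := xs - x.
  have xsE : xs = 1 *: d + x by rewrite scale1r /d subrK.
  have gs := quadf_expand A a alpha x d 1.
  have qs := quadf_expand B b beta x d 1.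
  rewrite -xsE expr1n !mul1r in gs qs.
  have Qa0 : 0 <= dotp (A *m d) d.
    have [->|d0] := eqVneq d 0; first by rewrite mulmx0 dotp0l.
    exact: ltW (Apd.2 d d0).
  have fQb : f x * dotp (B *m d) d <= 0.
    case: HB => [->|[[Hg HB]|[Hg HB]]].
    - by rewrite mul0mx dotp0l mulr0.
    - apply: mulr_ge0_le0; last exact: HB.
      by apply: divr_ge0; [exact: Hg | exact: ltW].
    - apply: mulr_le0_ge0; last exact: HB.
      by apply: mulr_le0_ge0; [exact: Hg | rewrite invr_ge0 ltW].
  rewrite /f grad_ratio_dot; last by rewrite gt_eqF.
  apply: (@core_ineq _ _ (q x) (q xs) (g xs / q xs) (g x / q x) (dotp (A *m d) d)).
  - exact: qx0.
  - exact: k0.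
  - by apply: le_trans (kqm x Kx) _.
  - exact: Hmin.
  - rewrite /f in fQb.
    rewrite /g /q gs qs; rewrite /g /q in fQb.
    set gx := quadf A a alpha x in fQb *; set qx := quadf B b beta x in fQb qx0 *.
    set G1 := dotp (wq A a x) d in fQb *; set Q1 := dotp (wq B b x) d in fQb *.
    set Qa := dotp (A *m d) d in fQb *; set Qb := dotp (B *m d) d in fQb *.
    have qs0' : qx + Q1 + 2^-1 * Qb != 0 by rewrite -qs gt_eqF.
    have -> : (qx + Q1 + 2^-1 * Qb) *
      ((gx + G1 + 2^-1 * Qa) / (qx + Q1 + 2^-1 * Qb) - gx / qx)
      = (G1 * qx - gx * Q1) / qx ^+ 2 * qx + Qa / 2 - gx / qx * Qb / 2.
      field.
      have -> : (qx + Q1) * 2 + Qb = 2 * (qx + Q1 + 2^-1 * Qb) by field.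
      by rewrite gt_eqF //= mulf_neq0.
    lra.
  - apply: Hmu => //; first exact: dotp_ge0.
    exact: sigma_min_le.
have M0 : 0 < M by lra.
have kq c : 0 <= c -> c * M <= m -> forall x, K x -> c * q x <= m.
  move=> c0 cM x [/andP [_ qxM]]; apply: le_trans cM.
  exact: ler_wpM2l.
have kap0 : 0 < kappa by apply: divr_gt0.
have kapM : kappa * M = m by rewrite /kappa divfK // gt_eqF.
split; [|split].
- apply: gen => //.
    by apply: kq; [exact: ltW | rewrite kapM].
  by move=> *; rewrite !mul0r.
- apply: gen.
  + by apply: divr_gt0.
  + apply: kq; first by apply: divr_ge0; [exact: ltW|].
    rewrite mulrAC kapM; lra.
  + move=> x [/andP [qxm qxM]] Qa dd dd0 sQ Qa0.
    have -> : sigma_min A / m * dd * (kappa / 2 * q x) =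
      (sigma_min A * dd) * (q x / (2 * M)).
      by rewrite /kappa; field; rewrite !gt_eqF.
    apply: st_le => //.
      by apply: divr_ge0; lra.
    rewrite ler_pdivrMr; lra.
- move=> lam /andP [l0 l1].
  apply: gen.
  + by apply: mulr_gt0.
  + apply: kq; first by apply: mulr_ge0; apply: ltW.
    rewrite -mulrA kapM; nra.
  + move=> x [/andP [qxm qxM]] Qa dd dd0 sQ Qa0.
    have -> : (lam^-1 - 1) * (sigma_min A / (4 * M)) * dd * (lam * kappa * q x) =
      (sigma_min A * dd) * ((1 - lam) * m * q x / (4 * M ^+ 2)).
      by rewrite /kappa; field; rewrite !gt_eqF.
    apply: st_le => //.
      apply: divr_ge0; last by apply: mulr_ge0; [|apply: exprn_ge0]; lra.
      apply: mulr_ge0; [apply: mulr_ge0|]; lra.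
    rewrite ler_pdivrMr; last by apply: mulr_gt0; [lra | apply: exprn_gt0].
    rewrite mul1r expr2.
    have : m * q x <= M * M by nra.
    nra.
Qed.
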